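(* CAP has exactly one solution, and for any auxiliary function $g:I\to\mathbb{R}$ and any $h\in I$ solving WFP (i.e. $\beta(h)=b$), this unique solution is $(\theta_1(h),\dots,\theta_k(h))$; moreover such an $h$ exists.
   Context: Let $s:[0,B]\to[0,\infty)$ satisfy $s(0)=0$, be strictly increasing, strictly concave, differentiable, with $s'$ continuous on $[0,B]$ (so $s'>0$ is strictly decreasing). Fix $b\in(0,B]$, an integer $k\ge2$, and constants $c_1\ge c_2\ge\cdots\ge c_k>0$. The Constrained Allocation Problem (CAP) is: find $\theta_1,\dots,\theta_k\ge0$ such that (i) $\theta_1+\cdots+\theta_k=b$; (ii) $\theta_1\le\theta_2\le\cdots\le\theta_k$; (iii) $s'(\theta_j)/s'(\theta_i)=c_j/c_i$ whenever $i<j$ and $\theta_j\ge\theta_i>0$; (iv) $s'(\theta_j)/s'(0)\ge c_j/c_i$ whenever $i<j$ and $\theta_j>\theta_i=0$. Let $s'^{(-1)}:[s'(b),s'(0)]\to[0,b]$ denote the inverse of $s'$ restricted to $[0,b]$. An auxiliary function is a continuous, strictly decreasing function $g:I\to\mathbb{R}$ on an interval $I\subseteq\mathbb{R}$ for which there exist $h_{lo}<h_{hi}$ in $I$ with $g(h_{hi})\le s'(b)/c_1$ and $g(h_{lo})\ge s'(0)/c_k$. For $i=1,\dots,k$ and $h\in I$ define $\theta_i(h)=0$ if $c_ig(h)\ge s'(0)$; $\theta_i(h)=s'^{(-1)}(c_ig(h))$ if $s'(b)<c_ig(h)<s'(0)$; and $\theta_i(h)=b$ if $c_ig(h)\le s'(b)$.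 Let $\beta(h)=\sum_{i=1}^k\theta_i(h)$. The Water-Filling Problem (WFP) is: find $h\in I$ with $\beta(h)=b$. *)

(* Defs.v *)
From Stdlib Require Import Reals Lra Epsilon.
Open Scope R_scope.

Fixpoint sum_to (n : nat) (f : nat -> R) : R :=
  match n with
  | O => 0
  | S m => sum_to m f + f n
  end.

Definition deriv_on (s ds : R -> R) (B : R) : Prop :=
  forall x, 0 <= x <= B ->
    limit1_in (fun y => (s y - s x) / (y - x))
              (fun y => 0 <= y <= B /\ y <> x) (ds x) x.

Definition cont_on (f : R -> R) (D : R -> Prop) : Prop :=
  forall x, D x -> limit1_in f D (f x) x.

Definition strictly_increasing_on (f : R -> R) (D : R -> Prop) : Prop :=
  forall x y, D x -> D y -> x < y -> f x < f y.

Definition strictly_decreasing_on (f : R -> R) (D : R -> Prop) : Prop :=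
  forall x y, D x -> D y -> x < y -> f y < f x.

Definition strictly_concave_on (f : R -> R) (a c : R) : Prop :=
  forall x y t, a <= x <= c -> a <= y <= c -> x <> y -> 0 < t < 1 ->
    t * f x + (1 - t) * f y < f (t * x + (1 - t) * y).

Definition is_interval (I : R -> Prop) : Prop :=
  forall x y z, I x -> I z -> x <= y <= z -> I y.

Definition standing (s ds : R -> R) (B b : R) (k : nat) (c : nat -> R) : Prop :=
  (forall x, 0 <= x <= B -> 0 <= s x) /\
  s 0 = 0 /\
  strictly_increasing_on s (fun x => 0 <= x <= B) /\
  strictly_concave_on s 0 B /\
  deriv_on s ds B /\
  cont_on ds (fun x => 0 <= x <= B) /\
  0 < b <= B /\
  (2 <= k)%nat /\
  (forall i, (1 <= i)%nat -> (i < k)%nat -> c (S i) <= c i) /\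
  0 < c k.

Definition CAP (ds : R -> R) (b : R) (k : nat) (c : nat -> R)
    (theta : nat -> R) : Prop :=
  (forall i, (1 <= i <= k)%nat -> 0 <= theta i) /\
  sum_to k theta = b /\
  (forall i, (1 <= i)%nat -> (i < k)%nat -> theta i <= theta (S i)) /\
  (forall i j, (1 <= i)%nat -> (i < j)%nat -> (j <= k)%nat ->
      theta j >= theta i -> theta i > 0 ->
      ds (theta j) / ds (theta i) = c j / c i) /\
  (forall i j, (1 <= i)%nat -> (i < j)%nat -> (j <= k)%nat ->
      theta j > theta i -> theta i = 0 ->
      ds (theta j) / ds 0 >= c j / c i).

(* s'^(-1) : [s'(b), s'(0)] -> [0,b], the inverse of s' restricted to [0,b]
   (chosen by Hilbert epsilon; well-defined since s' is continuous and
   strictly decreasing). *)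
Definition ds_inv (ds : R -> R) (b : R) (y : R) : R :=
  epsilon (inhabits 0) (fun x => 0 <= x <= b /\ ds x = y).

Definition auxiliary (ds : R -> R) (b : R) (k : nat) (c : nat -> R)
    (I : R -> Prop) (g : R -> R) : Prop :=
  is_interval I /\ cont_on g I /\ strictly_decreasing_on g I /\
  exists hlo hhi, I hlo /\ I hhi /\ hlo < hhi /\
    g hhi <= ds b / c 1%nat /\ g hlo >= ds 0 / c k.

Definition theta_h (ds : R -> R) (b : R) (c : nat -> R) (g : R -> R)
    (h : R) (i : nat) : R :=
  if Rle_dec (ds 0) (c i * g h) then 0
  else if Rlt_dec (ds b) (c i * g h) then ds_inv ds b (c i * g h)
  else b.

Definition beta (ds : R -> R) (b : R) (k : nat) (c : nat -> R)
    (g : R -> R) (h : R) : R :=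
  sum_to k (theta_h ds b c g h).

(* Main.v *)
Require Import Defs.
From Stdlib Require Import Reals Lra Lia Epsilon.
Open Scope R_scope.

Definition contw (D : R -> Prop) (f : R -> R) (x0 : R) : Prop :=
  forall eps, eps > 0 -> exists del, del > 0 /\
    forall x, D x -> Rabs (x - x0) < del -> Rabs (f x - f x0) < eps.

Lemma lim1_unfold f D l x0 : limit1_in f D l x0 ->
  forall eps, eps > 0 -> exists alp, alp > 0 /\
    forall x, D x -> Rabs (x - x0) < alp -> Rabs (f x - l) < eps.
Proof.
  intros H eps He. destruct (H eps He) as [alp [Ha Hx]].
  exists alp; split; auto. intros x Dx Hd. apply (Hx x). split; auto.
Qed.

Lemma lim_ge f D l x0 L : limit1_in f D l x0 ->
  (forall alp, alp > 0 -> exists y, D y /\ Rabs (y - x0) < alp /\ L <= f y) ->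
  L <= l.
Proof.
  intros H Hy. destruct (Rle_dec L l) as [h|h]; auto. exfalso.
  destruct (lim1_unfold _ _ _ _ H (L - l)) as [alp [Ha Hx]]; [lra|].
  destruct (Hy alp Ha) as [y [Dy [Hd HL]]].
  specialize (Hx y Dy Hd). apply Rabs_def2 in Hx. lra.
Qed.

Lemma lim_le f D l x0 L : limit1_in f D l x0 ->
  (forall alp, alp > 0 -> exists y, D y /\ Rabs (y - x0) < alp /\ f y <= L) ->
  l <= L.
Proof.
  intros H Hy. destruct (Rle_dec l L) as [h|h]; auto. exfalso.
  destruct (lim1_unfold _ _ _ _ H (l - L)) as [alp [Ha Hx]]; [lra|].
  destruct (Hy alp Ha) as [y [Dy [Hd HL]]].
  specialize (Hx y Dy Hd). apply Rabs_def2 in Hx. lra.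
Qed.

Lemma div_cmp a p c q : p > 0 -> q > 0 -> c * p <= a * q -> c / q <= a / p.
Proof.
  intros Hp Hq H.
  assert (a / p - c / q = (a * q - c * p) / (p * q)) by (field; lra).
  assert (0 <= (a * q - c * p) / (p * q)).
  { unfold Rdiv. apply Rmult_le_pos; [lra|]. left. apply Rinv_0_lt_compat. nra. }
  lra.
Qed.

Lemma div_cmp_strict a p c q : p > 0 -> q > 0 -> c * p < a * q -> c / q < a / p.
Proof.
  intros Hp Hq H.
  assert (a / p - c / q = (a * q - c * p) / (p * q)) by (field; lra).
  assert (0 < (a * q - c * p) / (p * q)).
  { unfold Rdiv. apply Rmult_lt_0_compat; [lra|]. apply Rinv_0_lt_compat. nra. }
  lra.
Qed.

Lemma chord_key s B x m y : strictly_concave_on s 0 B ->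
  0 <= x -> x < m -> m < y -> y <= B ->
  (y - m) * s x + (m - x) * s y < (y - x) * s m.
Proof.
  intros Hc H0 H1 H2 H3.
  set (t := (y - m) / (y - x)).
  assert (Ht : 0 < t < 1).
  { unfold t; split.
    - apply Rdiv_lt_0_compat; lra.
    - apply (Rmult_lt_reg_r (y - x)); [lra|]. unfold Rdiv. rewrite Rmult_assoc, Rinv_l; lra. }
  assert (Hm : t * x + (1 - t) * y = m) by (unfold t; field; lra).
  pose proof (Hc x y t ltac:(lra) ltac:(lra) ltac:(lra) Ht) as K.
  rewrite Hm in K.
  assert (E : (y - x) * (t * s x + (1 - t) * s y) = (y - m) * s x + (m - x) * s y)
    by (unfold t; field; lra).
  rewrite <- E. apply Rmult_lt_compat_l; lra.
Qed.

Lemma sl_left s B x m y : strictly_concave_on s 0 B ->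
  0 <= x -> x < m -> m < y -> y <= B ->
  (s y - s x) / (y - x) < (s m - s x) / (m - x).
Proof.
  intros Hc H0 H1 H2 H3. pose proof (chord_key s B x m y Hc H0 H1 H2 H3).
  apply div_cmp_strict; [lra|lra|nra].
Qed.

Lemma sl_right s B x m y : strictly_concave_on s 0 B ->
  0 <= x -> x < m -> m < y -> y <= B ->
  (s y - s m) / (y - m) < (s y - s x) / (y - x).
Proof.
  intros Hc H0 H1 H2 H3. pose proof (chord_key s B x m y Hc H0 H1 H2 H3).
  apply div_cmp_strict; [lra|lra|nra].
Qed.

Lemma ds_dec s ds B : strictly_concave_on s 0 B -> deriv_on s ds B ->
  forall x y, 0 <= x -> x < y -> y <= B -> ds y < ds x.
Proof.
  intros Hc Hd x y H0 H1 H2.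
  set (m := (x + y) / 2).
  assert (Hx : (s m - s x) / (m - x) <= ds x).
  { apply (lim_ge _ _ _ _ _ (Hd x ltac:(lra))).
    intros alp Ha. set (z := x + Rmin alp (m - x) / 2).
    assert (Hmin1 : Rmin alp (m - x) <= alp) by apply Rmin_l.
    assert (Hmin2 : Rmin alp (m - x) <= m - x) by apply Rmin_r.
    assert (Hmin3 : 0 < Rmin alp (m - x)) by (apply Rmin_glb_lt; unfold m; lra).
    exists z. unfold z, m in *. split; [split; lra|]. split.
    - rewrite Rabs_right; lra.
    - left. apply (sl_left s B); [exact Hc|lra..]. }
  assert (Hy : ds y <= (s y - s m) / (y - m)).
  { apply (lim_le _ _ _ _ _ (Hd y ltac:(lra))).
    intros alp Ha. set (z := y - Rmin alp (y - m) / 2).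
    assert (Hmin1 : Rmin alp (y - m) <= alp) by apply Rmin_l.
    assert (Hmin2 : Rmin alp (y - m) <= y - m) by apply Rmin_r.
    assert (Hmin3 : 0 < Rmin alp (y - m)) by (apply Rmin_glb_lt; unfold m; lra).
    exists z. unfold z, m in *. split; [split; lra|]. split.
    - rewrite Rabs_left; lra.
    - replace ((s (y - Rmin alp (y - (x + y) / 2) / 2) - s y) /
               (y - Rmin alp (y - (x + y) / 2) / 2 - y))
        with ((s y - s (y - Rmin alp (y - (x + y) / 2) / 2)) /
               (y - (y - Rmin alp (y - (x + y) / 2) / 2))) by (field; lra).
      left. apply (sl_right s B); [exact Hc|lra..]. }
  pose proof (sl_left s B x m y Hc ltac:(lra) ltac:(unfold m; lra) ltac:(unfold m; lra) H2).
  pose proof (sl_right s B x m y Hc ltac:(lra) ltac:(unfold m; lra) ltac:(unfold m; lra) H2).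
  lra.
Qed.

Lemma ds_nonneg s ds B : strictly_increasing_on s (fun x => 0 <= x <= B) ->
  deriv_on s ds B -> forall b, 0 < b <= B -> 0 <= ds b.
Proof.
  intros Hi Hd b Hb.
  apply (lim_ge _ _ _ _ _ (Hd b ltac:(lra))).
  intros alp Ha. set (z := b - Rmin alp b / 2).
  assert (Hmin1 : Rmin alp b <= alp) by apply Rmin_l.
  assert (Hmin2 : Rmin alp b <= b) by apply Rmin_r.
  assert (Hmin3 : 0 < Rmin alp b) by (apply Rmin_glb_lt; lra).
  exists z. unfold z in *. split; [split; lra|]. split.
  - rewrite Rabs_left; lra.
  - assert (s (b - Rmin alp b / 2) < s b) by (apply Hi; lra).
    replace ((s (b - Rmin alp b / 2) - s b) / (b - Rmin alp b / 2 - b))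
      with ((s b - s (b - Rmin alp b / 2)) / (Rmin alp b / 2)) by (field; lra).
    left. apply Rdiv_lt_0_compat; lra.
Qed.

Definition clamp a b u := Rmax a (Rmin b u).

Lemma clamp_in a b u : a <= b -> a <= clamp a b u <= b.
Proof. intros. unfold clamp, Rmax, Rmin. repeat destruct Rle_dec; lra. Qed.

Lemma clamp_id a b u : a <= u <= b -> clamp a b u = u.
Proof. intros. unfold clamp, Rmax, Rmin. repeat destruct Rle_dec; lra. Qed.

Lemma clamp_lip a b u v : a <= b -> Rabs (clamp a b u - clamp a b v) <= Rabs (u - v).
Proof.
  intros. unfold clamp, Rmax, Rmin. repeat destruct Rle_dec;
  unfold Rabs; repeat destruct Rcase_abs; lra.
Qed.

Lemma ivt_within f a b y : a <= b ->
  (forall x, a <= x <= b -> contw (fun u => a <= u <= b) f x) ->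
  (f a - y) * (f b - y) <= 0 -> exists z, a <= z <= b /\ f z = y.
Proof.
  intros Hab Hc Hs.
  set (F := fun u => f (clamp a b u) - y).
  assert (HF : continuity F).
  { intros x. unfold continuity_pt, continue_in, limit1_in, limit_in. simpl.
    unfold Rdist. intros eps He.
    destruct (Hc (clamp a b x) (clamp_in a b x Hab) eps He) as [del [Hd Hx]].
    exists del. split; auto. intros u [_ Hu]. unfold F.
    replace (f (clamp a b u) - y - (f (clamp a b x) - y))
      with (f (clamp a b u) - f (clamp a b x)) by ring.
    apply Hx. apply clamp_in; auto.
    eapply Rle_lt_trans; [apply clamp_lip; auto| exact Hu]. }
  destruct (IVT_cor F a b HF Hab) as [z [Hz Fz]].
  { unfold F. rewrite !clamp_id by lra. lra. }
  exists z. split; auto. unfold F in Fz. rewrite clamp_id in Fz by lra. lra.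
Qed.

Definition Theta (ds : R -> R) (b y : R) : R :=
  if Rle_dec (ds 0) y then 0
  else if Rlt_dec (ds b) y then ds_inv ds b y
  else b.

Lemma theta_h_Theta ds b c g h i : theta_h ds b c g h i = Theta ds b (c i * g h).
Proof. reflexivity. Qed.

Definition dsdec (ds : R -> R) (b : R) := forall x y, 0 <= x -> x < y -> y <= b -> ds y < ds x.

Lemma dsdec_le ds b : dsdec ds b -> forall x y, 0 <= x <= b -> 0 <= y <= b ->
  ds x <= ds y -> y <= x.
Proof.
  intros Hd x y Hx Hy H. destruct (Rle_dec y x); auto.
  assert (ds y < ds x) by (apply Hd; lra). lra.
Qed.

Lemma ds_inv_spec ds b y : 0 < b ->
  (forall x, 0 <= x <= b -> contw (fun u => 0 <= u <= b) ds x) ->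
  ds b <= y <= ds 0 -> 0 <= ds_inv ds b y <= b /\ ds (ds_inv ds b y) = y.
Proof.
  intros Hb Hc Hy. unfold ds_inv. apply epsilon_spec.
  apply ivt_within; auto; [lra|]. nra.
Qed.

Lemma Theta_spec ds b y : 0 < b -> dsdec ds b ->
  (forall x, 0 <= x <= b -> contw (fun u => 0 <= u <= b) ds x) ->
  (ds 0 <= y /\ Theta ds b y = 0) \/
  (ds b < y < ds 0 /\ 0 <= Theta ds b y <= b /\ ds (Theta ds b y) = y) \/
  (y <= ds b /\ Theta ds b y = b).
Proof.
  intros Hb Hd Hc. unfold Theta.
  destruct (Rle_dec (ds 0) y); [left; auto|].
  destruct (Rlt_dec (ds b) y); [right; left|right; right; split; auto; lra].
  split; [lra|]. apply ds_inv_spec; auto; lra.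
Qed.

Lemma Theta_range ds b y : 0 < b -> dsdec ds b ->
  (forall x, 0 <= x <= b -> contw (fun u => 0 <= u <= b) ds x) ->
  0 <= Theta ds b y <= b.
Proof.
  intros Hb Hd Hc. destruct (Theta_spec ds b y Hb Hd Hc) as [[? ->]|[[? [? ?]]|[? ->]]]; lra.
Qed.

Lemma Theta_mono ds b y1 y2 : 0 < b -> dsdec ds b ->
  (forall x, 0 <= x <= b -> contw (fun u => 0 <= u <= b) ds x) ->
  y1 <= y2 -> Theta ds b y2 <= Theta ds b y1.
Proof.
  intros Hb Hd Hc H12.
  assert (ds b < ds 0) by (apply Hd; lra).
  destruct (Theta_spec ds b y1 Hb Hd Hc) as [[? E1]|[[? [? E1]]|[? E1]]];
  destruct (Theta_spec ds b y2 Hb Hd Hc) as [[? E2]|[[? [? E2]]|[? E2]]];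
  try lra.
  apply (dsdec_le ds b Hd); lra.
Qed.

Lemma Theta_ds ds b x : 0 < b -> dsdec ds b ->
  (forall x, 0 <= x <= b -> contw (fun u => 0 <= u <= b) ds x) ->
  0 <= x <= b -> Theta ds b (ds x) = x.
Proof.
  intros Hb Hd Hc Hx.
  destruct (Theta_spec ds b (ds x) Hb Hd Hc) as [[H E]|[[H [H1 E]]|[H E]]].
  - rewrite E. destruct (Req_dec x 0); auto. assert (ds x < ds 0) by (apply Hd; lra). lra.
  - apply (f_equal (fun u => u)) in E.
    assert (Theta ds b (ds x) <= x) by (apply (dsdec_le ds b Hd); lra).
    assert (x <= Theta ds b (ds x)) by (apply (dsdec_le ds b Hd); lra). lra.
  - rewrite E. destruct (Req_dec x b); auto. assert (ds b < ds x) by (apply Hd; lra). lra.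
Qed.

Lemma Theta_cont ds b y0 : 0 < b -> dsdec ds b ->
  (forall x, 0 <= x <= b -> contw (fun u => 0 <= u <= b) ds x) ->
  forall eps, eps > 0 -> exists del, del > 0 /\
    forall y, Rabs (y - y0) < del -> Rabs (Theta ds b y - Theta ds b y0) < eps.
Proof.
  intros Hb Hd Hc eps He.
  set (x0 := Theta ds b y0).
  assert (Hr0 : 0 <= x0 <= b) by (apply Theta_range; auto).
  assert (Hdb : ds b < ds 0) by (apply Hd; lra).
  assert (Low : exists d1, d1 > 0 /\ forall y, Rabs (y - y0) < d1 -> x0 - eps / 2 <= Theta ds b y).
  { destruct (Rle_dec (x0 - eps / 2) 0).
    - exists 1. split; [lra|]. intros y _. pose proof (Theta_range ds b y Hb Hd Hc). lra.
    - set (xl := x0 - eps / 2).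
      assert (Hy0 : y0 <= ds x0).
      { destruct (Theta_spec ds b y0 Hb Hd Hc) as [[H E]|[[H [H1 E]]|[H E]]];
        fold x0 in E; [lra|lra|rewrite E; lra]. }
      assert (ds x0 < ds xl) by (apply Hd; unfold xl; lra).
      exists (ds xl - y0). split; [lra|]. intros y Hy. apply Rabs_def2 in Hy.
      rewrite <- (Theta_ds ds b xl Hb Hd Hc) by (unfold xl; lra).
      apply Theta_mono; auto; lra. }
  assert (Up : exists d2, d2 > 0 /\ forall y, Rabs (y - y0) < d2 -> Theta ds b y <= x0 + eps / 2).
  { destruct (Rle_dec b (x0 + eps / 2)).
    - exists 1. split; [lra|]. intros y _. pose proof (Theta_range ds b y Hb Hd Hc). lra.
    - set (xr := x0 + eps / 2).
      assert (Hy0 : ds x0 <= y0).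
      { destruct (Theta_spec ds b y0 Hb Hd Hc) as [[H E]|[[H [H1 E]]|[H E]]];
        fold x0 in E; [rewrite E; lra|lra|lra]. }
      assert (ds xr < ds x0) by (apply Hd; unfold xr; lra).
      exists (y0 - ds xr). split; [lra|]. intros y Hy. apply Rabs_def2 in Hy.
      rewrite <- (Theta_ds ds b xr Hb Hd Hc) by (unfold xr; lra).
      apply Theta_mono; auto; lra. }
  destruct Low as [d1 [Hd1 L]]. destruct Up as [d2 [Hd2 U]].
  exists (Rmin d1 d2). split; [apply Rmin_glb_lt; lra|].
  intros y Hy.
  assert (Rabs (y - y0) < d1) by (eapply Rlt_le_trans; [exact Hy|apply Rmin_l]).
  assert (Rabs (y - y0) < d2) by (eapply Rlt_le_trans; [exact Hy|apply Rmin_r]).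
  specialize (L y H). specialize (U y H0). fold x0.
  apply Rabs_def1; lra.
Qed.

Lemma sum_zero n f : (forall i, (1 <= i <= n)%nat -> f i = 0) -> sum_to n f = 0.
Proof.
  induction n; simpl; intros H; auto.
  rewrite IHn by (intros; apply H; lia). rewrite H by lia. ring.
Qed.

Lemma sum_nonneg n f : (forall i, (1 <= i <= n)%nat -> 0 <= f i) -> 0 <= sum_to n f.
Proof.
  induction n; simpl; intros H; [lra|].
  pose proof (IHn ltac:(intros; apply H; lia)). pose proof (H (S n) ltac:(lia)). lra.
Qed.

Lemma sum_ge1 n f i : (forall i, (1 <= i <= n)%nat -> 0 <= f i) ->
  (1 <= i <= n)%nat -> f i <= sum_to n f.
Proof.
  induction n; simpl; intros H Hi; [lia|].
  destruct (Nat.eq_dec i (S n)).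
  - subst. pose proof (sum_nonneg n f ltac:(intros; apply H; lia)). lra.
  - pose proof (IHn ltac:(intros; apply H; lia) ltac:(lia)). pose proof (H (S n) ltac:(lia)). lra.
Qed.

Lemma sum_ge2 n f i j : (forall i, (1 <= i <= n)%nat -> 0 <= f i) ->
  (1 <= i)%nat -> (i < j)%nat -> (j <= n)%nat -> f i + f j <= sum_to n f.
Proof.
  induction n; simpl; intros H Hi Hij Hj; [lia|].
  destruct (Nat.eq_dec j (S n)).
  - subst. pose proof (sum_ge1 n f i ltac:(intros; apply H; lia) ltac:(lia)). lra.
  - pose proof (IHn ltac:(intros; apply H; lia) Hi Hij ltac:(lia)). pose proof (H (S n) ltac:(lia)). lra.
Qed.

Lemma sum_diff n f g i : (forall i, (1 <= i <= n)%nat -> f i <= g i) ->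
  (1 <= i <= n)%nat -> g i - f i <= sum_to n g - sum_to n f.
Proof.
  intros H Hi.
  assert (E : forall m, sum_to m g - sum_to m f = sum_to m (fun j => g j - f j)).
  { induction m; simpl; [ring|]. rewrite <- IHm. ring. }
  rewrite E. apply (sum_ge1 n (fun j => g j - f j)); auto.
  intros; pose proof (H i0 H0); lra.
Qed.

Lemma sum_cont D n (F : nat -> R -> R) x0 :
  (forall i, (1 <= i <= n)%nat -> contw D (F i) x0) ->
  contw D (fun x => sum_to n (fun i => F i x)) x0.
Proof.
  induction n; simpl; intros H eps He.
  - exists 1. split; [lra|]. intros. rewrite Rminus_diag, Rabs_R0. lra.
  - destruct (IHn ltac:(intros; apply H; lia) (eps/2) ltac:(lra)) as [d1 [Hd1 H1]].
    destruct (H (S n) ltac:(lia) (eps/2) ltac:(lra)) as [d2 [Hd2 H2]].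
    exists (Rmin d1 d2). split; [apply Rmin_glb_lt; lra|].
    intros x Dx Hx.
    assert (Rabs (x - x0) < d1) by (eapply Rlt_le_trans; [exact Hx|apply Rmin_l]).
    assert (Rabs (x - x0) < d2) by (eapply Rlt_le_trans; [exact Hx|apply Rmin_r]).
    specialize (H1 x Dx H0). specialize (H2 x Dx H3).
    apply Rabs_def2 in H1. apply Rabs_def2 in H2. apply Rabs_def1; lra.
Qed.

Lemma mono_trans (f : nat -> R) k :
  (forall i, (1 <= i)%nat -> (i < k)%nat -> f i <= f (S i)) ->
  forall i j, (1 <= i)%nat -> (i <= j)%nat -> (j <= k)%nat -> f i <= f j.
Proof.
  intros H i j Hi Hij Hj. induction j.
  - lia.
  - destruct (Nat.eq_dec i (S j)). { subst; lra. }
    pose proof (IHj ltac:(lia) ltac:(lia)). pose proof (H j ltac:(lia) ltac:(lia)). lra.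
Qed.

Lemma wfp_cap ds b k c G : 0 < b -> dsdec ds b ->
  (forall x, 0 <= x <= b -> contw (fun u => 0 <= u <= b) ds x) ->
  0 <= ds b -> (2 <= k)%nat ->
  (forall i, (1 <= i <= k)%nat -> 0 < c i) ->
  (forall i j, (1 <= i)%nat -> (i <= j)%nat -> (j <= k)%nat -> c j <= c i) ->
  sum_to k (fun i => Theta ds b (c i * G)) = b ->
  CAP ds b k c (fun i => Theta ds b (c i * G)).
Proof.
  intros Hb Hd Hc Hdsb Hk Hcp Hcm Hsum.
  set (T := fun i => Theta ds b (c i * G)) in *.
  assert (Hdb : ds b < ds 0) by (apply Hd; lra).
  assert (Hr : forall i, 0 <= T i <= b) by (intros; apply Theta_range; auto).
  assert (Hnn : forall i, (1 <= i <= k)%nat -> 0 <= T i) by (intros; apply Hr).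
  assert (Hpair : forall i j, (1 <= i)%nat -> (i < j)%nat -> (j <= k)%nat -> T i + T j <= b)
    by (intros; rewrite <- Hsum; apply sum_ge2; auto).
  assert (Hsp : forall i, (1 <= i <= k)%nat ->
    (ds 0 <= c i * G /\ T i = 0) \/
    (ds b < c i * G < ds 0 /\ ds (T i) = c i * G) \/
    (c i * G <= ds b /\ T i = b)).
  { intros i Hi. destruct (Theta_spec ds b (c i * G) Hb Hd Hc) as [?|[[? [? ?]]|?]]; auto. }
  assert (HG : 0 < G).
  { destruct (Rlt_dec 0 G); auto. exfalso.
    assert (Hall : forall i, (1 <= i <= k)%nat -> T i = b).
    { intros i Hi. pose proof (Hcp i Hi).
      assert (c i * G <= 0) by nra.
      destruct (Hsp i Hi) as [[? ?]|[[? ?]|[? ?]]]; auto; lra. }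
    pose proof (Hpair 1%nat 2%nat ltac:(lia) ltac:(lia) ltac:(lia)).
    rewrite !Hall in H by lia. lra. }
  unfold CAP. split; [|split; [exact Hsum|split; [|split]]].
  - exact Hnn.
  - intros i Hi Hik. unfold T. apply Theta_mono; auto.
    pose proof (Hcm i (S i) Hi ltac:(lia) ltac:(lia)). nra.
  - intros i j Hi Hij Hjk Hji Hip.
    pose proof (Hpair i j Hi Hij Hjk).
    pose proof (Hcp i ltac:(lia)). pose proof (Hcp j ltac:(lia)).
    assert (Ei : ds (T i) = c i * G).
    { destruct (Hsp i ltac:(lia)) as [[? ?]|[[? ?]|[? ?]]]; auto; lra. }
    assert (Ej : ds (T j) = c j * G).
    { destruct (Hsp j ltac:(lia)) as [[? ?]|[[? ?]|[? ?]]]; auto; lra. }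
    rewrite Ei, Ej. field. split; lra.
  - intros i j Hi Hij Hjk Hji Hi0.
    pose proof (Hcp i ltac:(lia)). pose proof (Hcp j ltac:(lia)).
    assert (Ei : ds 0 <= c i * G).
    { destruct (Hsp i ltac:(lia)) as [[? ?]|[[? E]|[? ?]]]; auto.
      - rewrite Hi0 in E. lra.
      - lra. }
    assert (Ej : c j * G <= ds (T j)).
    { destruct (Hsp j ltac:(lia)) as [[? ?]|[[? ?]|[? E]]]; try lra.
      rewrite E; lra. }
    apply Rle_ge. apply div_cmp; [lra|lra|].
    assert (ds (T j) * c i >= c j * G * c i) by nra. nra.
Qed.

Lemma Theta_low ds b y : ds 0 <= y -> Theta ds b y = 0.
Proof. intros. unfold Theta. destruct Rle_dec; [auto|lra]. Qed.

Lemma Theta_high ds b y : ds b < ds 0 -> y <= ds b -> Theta ds b y = b.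
Proof. intros. unfold Theta. destruct Rle_dec; [lra|]. destruct Rlt_dec; [lra|auto]. Qed.

Lemma wfp_exists ds b k c I g : 0 < b -> dsdec ds b ->
  (forall x, 0 <= x <= b -> contw (fun u => 0 <= u <= b) ds x) ->
  0 <= ds b -> (2 <= k)%nat ->
  (forall i, (1 <= i <= k)%nat -> 0 < c i) ->
  (forall i j, (1 <= i)%nat -> (i <= j)%nat -> (j <= k)%nat -> c j <= c i) ->
  auxiliary ds b k c I g ->
  exists h, I h /\ beta ds b k c g h = b.
Proof.
  intros Hb Hd Hc Hdsb Hk Hcp Hcm [HI [Hg [Hgd [hlo [hhi [Hlo [Hhi [Hlh [Ghi Glo]]]]]]]]].
  assert (Hdb : ds b < ds 0) by (apply Hd; lra).
  assert (Hck : 0 < c k) by (apply Hcp; lia).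
  assert (Hc1 : 0 < c 1%nat) by (apply Hcp; lia).
  set (F := fun h => sum_to k (fun i => Theta ds b (c i * g h))).
  assert (HF : forall x, hlo <= x <= hhi -> contw (fun u => hlo <= u <= hhi) F x).
  { intros x Hx. unfold F.
    apply (sum_cont _ k (fun i h => Theta ds b (c i * g h))).
    intros i Hi eps He. pose proof (Hcp i Hi) as Hci.
    destruct (Theta_cont ds b (c i * g x) Hb Hd Hc eps He) as [d1 [Hd1 H1]].
    assert (Ix : I x) by (apply (HI hlo x hhi); auto).
    destruct (lim1_unfold _ _ _ _ (Hg x Ix) (d1 / c i) ltac:(apply Rdiv_lt_0_compat; lra))
      as [d2 [Hd2 H2]].
    exists d2. split; auto. intros u Hu Hux. apply H1.
    assert (Iu : I u) by (apply (HI hlo u hhi); auto).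
    specialize (H2 u Iu Hux).
    replace (c i * g u - c i * g x) with (c i * (g u - g x)) by ring.
    rewrite Rabs_mult, (Rabs_right (c i)) by lra.
    apply (Rmult_lt_compat_l (c i)) in H2; [|lra].
    replace (c i * (d1 / c i)) with d1 in H2 by (field; lra). exact H2. }
  assert (F0 : F hlo = 0).
  { unfold F. apply sum_zero. intros i Hi. apply Theta_low.
    pose proof (Hcp i Hi). pose proof (Hcm i k ltac:(lia) ltac:(lia) ltac:(lia)).
    assert (Hq : ds 0 / c k * c k = ds 0) by (field; lra).
    assert (0 < ds 0 / c k) by (apply Rdiv_lt_0_compat; lra).
    nra. }
  assert (Fhi : 2 * b <= F hhi).
  { assert (Ht : forall i, (1 <= i <= k)%nat -> Theta ds b (c i * g hhi) = b).
    { intros i Hi. apply Theta_high; auto.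
      pose proof (Hcp i Hi). pose proof (Hcm 1%nat i ltac:(lia) ltac:(lia) ltac:(lia)).
      assert (Hq : ds b / c 1%nat * c 1%nat = ds b) by (field; lra).
      destruct (Rle_dec 0 (g hhi)); nra. }
    unfold F.
    pose proof (sum_ge2 k (fun i => Theta ds b (c i * g hhi)) 1 2
      ltac:(intros; apply Theta_range; auto) ltac:(lia) ltac:(lia) ltac:(lia)) as S.
    simpl in S. rewrite !Ht in S by lia. lra. }
  destruct (ivt_within F hlo hhi b ltac:(lra) HF ltac:(nra)) as [h [Hh Fh]].
  exists h. split; [apply (HI hlo h hhi); auto|]. exact Fh.
Qed.

Definition charac ds b k c (t : nat -> R) lam :=
  forall i, (1 <= i <= k)%nat ->
    (t i = 0 /\ ds 0 <= c i * lam) \/ (0 < t i <= b /\ ds (t i) = c i * lam).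

Lemma cap_char ds b k c t : 0 < b -> 0 < ds 0 -> (2 <= k)%nat ->
  (forall i, (1 <= i <= k)%nat -> 0 < c i) ->
  CAP ds b k c t -> exists lam, charac ds b k c t lam.
Proof.
  intros Hb Hd0 Hk Hcp [Hnn [Hsum [Hmon [Hrat Hzero]]]].
  assert (Hle : forall i, (1 <= i <= k)%nat -> t i <= b)
    by (intros; rewrite <- Hsum; apply sum_ge1; auto).
  assert (Hm := mono_trans t k Hmon).
  assert (Htk : 0 < t k).
  { destruct (Rlt_dec 0 (t k)); auto. exfalso.
    assert (sum_to k t = 0).
    { apply sum_zero. intros i Hi. pose proof (Hm i k ltac:(lia) ltac:(lia) ltac:(lia)).
      pose proof (Hnn i Hi). lra. }
    lra. }
  pose proof (Hcp k ltac:(lia)) as Hck.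
  exists (ds (t k) / c k). intros i Hi.
  destruct (Nat.eq_dec i k) as [->|Hik].
  { right. split; [split; auto; apply Hle; lia|]. field; lra. }
  pose proof (Hcp i Hi) as Hci.
  pose proof (Hm i k ltac:(lia) ltac:(lia) ltac:(lia)) as Hik'.
  destruct (Rlt_dec 0 (t i)) as [Hp|Hp].
  - right. split; [split; auto; apply Hle; lia|].
    pose proof (Hrat i k ltac:(lia) ltac:(lia) ltac:(lia) ltac:(lra) Hp) as R.
    destruct (Req_dec (ds (t i)) 0) as [Z|Z].
    + exfalso. rewrite Z in R. unfold Rdiv in R. rewrite Rinv_0, Rmult_0_r in R.
      assert (0 < c k / c i) by (apply Rdiv_lt_0_compat; lra). lra.
    + assert (E : ds (t k) = c k / c i * ds (t i)) by (rewrite <- R; field; auto).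
      rewrite E. field. lra.
  - left. assert (Z : t i = 0) by (pose proof (Hnn i Hi); lra). split; auto.
    pose proof (Hzero i k ltac:(lia) ltac:(lia) ltac:(lia) ltac:(lra) Z) as R.
    replace (c i * (ds (t k) / c k)) with ((ds (t k) / ds 0) * (c i * ds 0 / c k))
      by (field; lra).
    replace (ds 0) with ((c k / c i) * (c i * ds 0 / c k)) at 1 by (field; lra).
    apply Rmult_le_compat_r; [|lra].
    left. apply Rdiv_lt_0_compat; [nra|lra].
Qed.

Lemma charac_le ds b k c t1 t2 l1 l2 : dsdec ds b ->
  (forall i, (1 <= i <= k)%nat -> 0 < c i) ->
  charac ds b k c t1 l1 -> charac ds b k c t2 l2 -> l1 <= l2 ->
  forall i, (1 <= i <= k)%nat -> t2 i <= t1 i.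
Proof.
  intros Hd Hcp H1 H2 Hl i Hi. pose proof (Hcp i Hi).
  destruct (H2 i Hi) as [[E2 _]|[P2 E2]].
  - destruct (H1 i Hi) as [[E1 _]|[P1 E1]]; lra.
  - assert (ds (t2 i) < ds 0) by (apply Hd; lra).
    destruct (H1 i Hi) as [[E1 F1]|[P1 E1]].
    + exfalso. nra.
    + apply (dsdec_le ds b Hd); try lra. rewrite E1, E2. nra.
Qed.

Lemma cap_unique ds b k c t1 t2 : 0 < b -> 0 < ds 0 -> (2 <= k)%nat -> dsdec ds b ->
  (forall i, (1 <= i <= k)%nat -> 0 < c i) ->
  CAP ds b k c t1 -> CAP ds b k c t2 -> forall i, (1 <= i <= k)%nat -> t1 i = t2 i.
Proof.
  intros Hb Hd0 Hk Hd Hcp C1 C2 i Hi.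
  destruct (cap_char ds b k c t1 Hb Hd0 Hk Hcp C1) as [l1 H1].
  destruct (cap_char ds b k c t2 Hb Hd0 Hk Hcp C2) as [l2 H2].
  destruct C1 as [_ [S1 _]]. destruct C2 as [_ [S2 _]].
  destruct (Rle_dec l1 l2) as [L|L].
  - pose proof (charac_le ds b k c t1 t2 l1 l2 Hd Hcp H1 H2 L) as P.
    pose proof (sum_diff k t2 t1 i P Hi). pose proof (P i Hi). lra.
  - pose proof (charac_le ds b k c t2 t1 l2 l1 Hd Hcp H2 H1 ltac:(lra)) as P.
    pose proof (sum_diff k t1 t2 i P Hi). pose proof (P i Hi). lra.
Qed.

Theorem theorem3 (s ds : R -> R) (B b : R) (k : nat) (c : nat -> R) :
  standing s ds B b k c ->
  (* CAP has exactly one solution (as a k-tuple theta_1..theta_k) *)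
  ((exists theta : nat -> R, CAP ds b k c theta) /\
   (forall t1 t2 : nat -> R, CAP ds b k c t1 -> CAP ds b k c t2 ->
      forall i, (1 <= i <= k)%nat -> t1 i = t2 i)) /\
  (* for every auxiliary function, every WFP solution h gives the solution *)
  (forall (I : R -> Prop) (g : R -> R), auxiliary ds b k c I g ->
     forall h, I h -> beta ds b k c g h = b ->
       CAP ds b k c (theta_h ds b c g h)) /\
  (* and such an h exists *)
  (forall (I : R -> Prop) (g : R -> R), auxiliary ds b k c I g ->
     exists h, I h /\ beta ds b k c g h = b).
Proof.
  intros (Hs0 & Hs00 & Hinc & Hconc & Hder & Hcont & Hb & Hk & Hcmon & Hck).
  assert (Hd : dsdec ds b) by (intros x y ? ? ?; apply (ds_dec s ds B); auto; lra).
  assert (Hcb : forall x, 0 <= x <= b -> contw (fun u => 0 <= u <= b) ds x).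
  { intros x Hx eps He.
    destruct (lim1_unfold _ _ _ _ (Hcont x ltac:(lra)) eps He) as [a [Ha H]].
    exists a. split; auto. intros u Hu Hux. apply H; auto; lra. }
  assert (Hdsb : 0 <= ds b) by (apply (ds_nonneg s ds B); auto).
  assert (Hdb : ds b < ds 0) by (apply Hd; lra).
  assert (Hcm : forall i j, (1 <= i)%nat -> (i <= j)%nat -> (j <= k)%nat -> c j <= c i).
  { intros i j Hi Hij Hj.
    pose proof (mono_trans (fun i => - c i) k ltac:(intros i0 Hi0 Hi0k; simpl; pose proof (Hcmon i0 Hi0 Hi0k); lra) i j Hi Hij Hj).
    simpl in H. lra. }
  assert (Hcp : forall i, (1 <= i <= k)%nat -> 0 < c i).
  { intros i Hi. pose proof (Hcm i k ltac:(lia) ltac:(lia) ltac:(lia)). lra. }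
  assert (Ex : forall I g, auxiliary ds b k c I g -> exists h, I h /\ beta ds b k c g h = b).
  { intros I g Ha. apply (wfp_exists ds b k c I g); auto; lra. }
  assert (Wc : forall I g, auxiliary ds b k c I g ->
     forall h, I h -> beta ds b k c g h = b -> CAP ds b k c (theta_h ds b c g h)).
  { intros I g Ha h Ih Hbeta. apply (wfp_cap ds b k c (g h)); auto; lra. }
  split; [split|split; auto].
  - assert (Ha : auxiliary ds b k c (fun _ => True) (fun h => - h)).
    { unfold auxiliary. split; [intros ? ? ? ? ? ?; auto|]. split.
      { intros x _ eps He. exists eps. split; auto. intros u [_ Hu]. simpl in *.
        unfold Rdist in *. replace (- u - - x) with (- (u - x)) by ring.
        rewrite Rabs_Ropp. auto. }
      split; [intros x y _ _ H; lra|].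
      pose proof (Hcp 1%nat ltac:(lia)) as Hc1.
      pose proof (Hcm 1%nat k ltac:(lia) ltac:(lia) ltac:(lia)).
      assert (ds b / c 1%nat <= ds 0 / c k) by (apply div_cmp; [lra|lra|nra]).
      exists (- (ds 0 / c k) - 1), (- (ds b / c 1%nat)).
      repeat split; auto; lra. }
    destruct (Ex _ _ Ha) as [h [Ih Hbeta]].
    eexists. exact (Wc _ _ Ha h Ih Hbeta).
  - intros t1 t2 C1 C2. apply (cap_unique ds b k c t1 t2); auto; lra.
Qed.
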